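(* There exist $p\in\mathcal P$ and $x\in N$ such that $D_{\mu(p)}(p)=D_{\mu(p^r)}(p^r)=\{x\}$ if and only if $(h,n)\notin T_1$, where $T_1=\{(h,n): h\le3\}\cup\{(h,n): n\le3\}\cup\{(4,4),(5,4),(7,4),(5,5)\}$.
   Context: Let $n,h\ge2$ be integers, $N=\{1,\dots,n\}$, $H=\{1,\dots,h\}$. $\mathcal P$ is the set of $h$-tuples $p=(p_1,\dots,p_h)$ of linear orders on $N$; $p^r$ is obtained by reversing each $p_i$; $x>_{p_i}y$ means $x\ne y$ and $p_i$ ranks $x$ above $y$. For an integer $\mu$ with $h/2<\mu\le h$, $D_\mu(p)=\{x\in N: \forall y\in N,\ |\{i: y>_{p_i}x\}|<\mu\}$, and $\mu(p)=\min\{\mu\in\mathbb N\cap(h/2,h]: D_\mu(p)\neq\varnothing\}$. *)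

(* Defs.v *)
From mathcomp Require Import all_boot.
Set Implicit Arguments. Unset Strict Implicit. Unset Printing Implicit Defensive.

(* N = {1..n} is modelled as 'I_n, H = {1..h} as 'I_h.
   A linear order on N is a boolean relation [r] where [r x y] means
   "x is ranked at or above y": reflexive, antisymmetric, transitive, total. *)
Definition linear_order (n : nat) (r : rel 'I_n) : Prop :=
  [/\ reflexive r, antisymmetric r, transitive r & total r].

(* A profile: an h-tuple of relations (the linear-order condition is imposed
   separately, as membership in \mathcal P). *)
Definition profile (n h : nat) := 'I_h -> rel 'I_n.

Definition in_P (n h : nat) (p : profile n h) : Prop :=
  forall i, linear_order (p i).

Definition spref (n h : nat) (p : profile n h) (i : 'I_h) (x y : 'I_n) : bool :=
  (x != y) && p i x y.

Definition rev_profile (n h : nat) (p : profile n h) : profile n h :=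
  fun i x y => p i y x.

Definition D (n h : nat) (mu : nat) (p : profile n h) : {set 'I_n} :=
  [set x | [forall y, #|[set i | spref p i y x]| < mu]].

(* mu(p) = min { mu in N /\ (h/2, h] | D_mu(p) <> empty }.
   (The default value h of the min is never used for profiles in \mathcal P,
   since D_h(p) is nonempty.) *)
Definition mu_of (n h : nat) (p : profile n h) : nat :=
  \big[minn/h]_(m < h.+1 | (h < 2 * m) && (D m p != set0)) (m : nat).

Definition T1 (h n : nat) : Prop :=
  h <= 3 \/ n <= 3 \/
  (h, n) = (4, 4) \/ (h, n) = (5, 4) \/ (h, n) = (7, 4) \/ (h, n) = (5, 5).

(* Main.v *)
Require Import Defs.
From mathcomp Require Import all_boot.
From mathcomp Require Import zify.
Set Implicit Arguments. Unset Strict Implicit. Unset Printing Implicit Defensive.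

Definition cnt (n h : nat) (p : profile n h) (z y : 'I_n) : nat :=
  #|[set i | spref p i z y]|.

Definition good (n h : nat) (p : profile n h) (x : 'I_n) : Prop :=
  forall y, y != x -> exists z, h < 2 * cnt p z y /\ forall w, cnt p w x < cnt p z y.

Lemma cnt_le n h (p : profile n h) z y : cnt p z y <= h.
Proof. by apply: leq_trans (max_card _) _; rewrite card_ord. Qed.

Lemma cnt_diag n h (p : profile n h) y : cnt p y y = 0.
Proof. rewrite /cnt (_ : [set i | spref p i y y] = set0) ?cards0 //. by apply/setP=> i; rewrite !inE /spref eqxx. Qed.

Lemma cnt_rev n h (p : profile n h) z y : cnt (rev_profile p) z y = cnt p y z.
Proof. by rewrite /cnt; apply: eq_card=> i; rewrite !inE /spref /rev_profile eq_sym. Qed.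

Lemma cnt_sum n h (p : profile n h) z y : cnt p z y = \sum_(i < h) (spref p i z y : nat).
Proof.
rewrite /cnt -sum1_card big_mkcond /=; apply: eq_bigr => i _.
by rewrite inE; case: (spref p i z y).
Qed.

Lemma mu_gt n h (p : profile n h) : 0 < h -> h < 2 * mu_of p.
Proof.
move=> h0; rewrite /mu_of; apply: (big_ind (fun v => h < 2 * v)).
- lia.
- move=> a b Ha Hb; lia.
- by move=> i /andP[].
Qed.

Lemma mu_le n h (p : profile n h) : mu_of p <= h.
Proof.
rewrite /mu_of; apply: (big_ind (fun v => v <= h)) => //.
- move=> a b Ha Hb; lia.
- by move=> i _; rewrite -ltnS.
Qed.

Lemma bigmin_le_seq (I : eqType) (r : seq I) (P : pred I) (F : I -> nat) d i0 :
  i0 \in r -> P i0 -> \big[minn/d]_(i <- r | P i) F i <= F i0.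
Proof.
elim: r => [|a r IH] //=; rewrite inE big_cons => /orP[/eqP-> Pa|ir Pi].
- by rewrite Pa geq_minl.
- case: (P a); last exact: IH.
  by rewrite (leq_trans (geq_minr _ _)) ?IH.
Qed.

Lemma mu_min n h (p : profile n h) m :
  m <= h -> h < 2 * m -> D m p != set0 -> mu_of p <= m.
Proof.
move=> mh hm Dm; rewrite /mu_of.
have mlt : m < h.+1 by [].
pose i0 := Ordinal mlt.
have -> : m = (fun i : 'I_h.+1 => (i : nat)) i0 by [].
apply: bigmin_le_seq; first exact: mem_index_enum.
by rewrite /= hm Dm.
Qed.

Lemma char_fwd n h (p : profile n h) x :
  0 < h -> D (mu_of p) p = [set x] -> good p x.
Proof.
move=> h0 HD y yx.
have := mu_gt p h0; set mu := mu_of p => hmu.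
have : y \notin D mu p by rewrite HD inE.
rewrite inE => /forallPn[z]; rewrite -leqNgt => Hz0.
have Hz : mu <= cnt p z y := Hz0.
have : x \in D mu p by rewrite HD inE.
rewrite inE => /forallP Hx.
exists z; split; first by lia.
by move=> w; apply: leq_trans (Hx w) Hz.
Qed.

Lemma char_bwd n h (p : profile n h) x :
  (exists y, y != x) -> good p x -> D (mu_of p) p = [set x].
Proof.
move=> [y0 y0x] G.
set Mx := \max_w cnt p w x.
have HMx : forall w, cnt p w x <= Mx by move=> w; exact: leq_bigmax.
have HMlt : forall k, (forall w, cnt p w x < k) -> Mx < k.
  move=> k Hk; have k0 := Hk x.
  have : Mx <= k.-1 by apply/bigmax_leqP => w _; have := Hk w; lia.
  lia.
set K := maxn (h %/ 2).+1 Mx.+1.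
have hd := divn_eq h 2; have hm2 := ltn_pmod h (isT : 0 < 2).
have [z0 [hz0 Hz0]] := G y0 y0x.
have cz0 := cnt_le p z0 y0.
have Mz0 : Mx < cnt p z0 y0 by apply: HMlt.
have hK : h < 2 * K by rewrite /K; lia.
have Kh : K <= h by rewrite /K; lia.
have xK : x \in D K p by rewrite inE; apply/forallP => w; apply: leq_ltn_trans (HMx w) _; rewrite /K; lia.
have DKx : D K p = [set x].
  apply/setP => y; rewrite [RHS]inE; apply/idP/idP; last by move/eqP->.
  apply: contraLR => yx; have [z [hz Hz]] := G y yx.
  have : Mx < cnt p z y by apply: HMlt.
  move=> Mzy; rewrite inE; apply/forallPn; exists z; rewrite -leqNgt; change (K <= cnt p z y); rewrite /K; lia.
have muK : mu_of p = K.
  apply/eqP; rewrite eqn_leq; apply/andP; split.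
    by apply: mu_min => //; apply/set0Pn; exists x.
  rewrite /mu_of; apply: (big_ind (fun v => K <= v)) => //.
    by move=> a b Ha Hb; rewrite leq_min Ha Hb.
  move=> m /andP[hm /set0Pn[y]]; rewrite inE => /forallP Hy.
  have : Mx < m.
    have [eyx|yx] := eqVneq y x; first by apply: HMlt => w; rewrite -eyx; exact: Hy.
    have [z [hz Hz]] := G y yx.
    have : cnt p z y < m := Hy z. have : Mx < cnt p z y by apply: HMlt.
    lia.
  rewrite /K; lia.
by rewrite muK.
Qed.


Lemma spref_trans n h (p : profile n h) i a b c :
  in_P p -> spref p i a b -> spref p i b c -> spref p i a c.
Proof.
move=> /(_ i) [_ anti tr _] /andP[ab pab] /andP[bc pbc].
rewrite /spref (tr _ _ _ pab pbc) andbT.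
apply/negP => /eqP eac; move: pbc; rewrite -eac => pba.
by have := anti a b; rewrite pab pba => /(_ isT) eab; rewrite eab eqxx in ab.
Qed.

Lemma spref_compl n h (p : profile n h) i a b :
  in_P p -> a != b -> spref p i b a = ~~ spref p i a b.
Proof.
move=> /(_ i) [_ anti _ tot] ab; rewrite /spref ab eq_sym ab /=.
case pab: (p i a b); case pba: (p i b a) => //=.
- by have := anti a b; rewrite pab pba => /(_ isT) eab; rewrite eab eqxx in ab.
- by move: (tot a b); rewrite pab pba.
Qed.

Lemma cnt_compl n h (p : profile n h) a b :
  in_P p -> a != b -> cnt p a b + cnt p b a = h.
Proof.
move=> Hp ab; rewrite /cnt.
transitivity #|'I_h|; last exact: card_ord.
rewrite -(cardsC [set i | spref p i a b]).
congr (_ + _); apply: eq_card => i; rewrite !inE.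
by rewrite (spref_compl _ Hp ab).
Qed.

Lemma top_exists n h (p : profile n h) i (Y : {set 'I_n}) y1 :
  in_P p -> y1 \in Y -> exists2 y0, y0 \in Y & forall z, z \in Y -> ~~ spref p i z y0.
Proof.
move=> Hp y1Y.
case: (arg_minnP (fun y => #|[set z | spref p i z y]|) y1Y) => y0 y0Y Hmin.
exists y0 => // z zY; apply/negP => zy0.
have := Hmin z zY; rewrite leqNgt => /negP; apply; apply: proper_card.
apply/properP; split.
  apply/subsetP => w; rewrite !inE => wz; exact: spref_trans Hp wz zy0.
exists z; rewrite !inE //= /spref eqxx //.
Qed.

Lemma count_bound n h (p : profile n h) (Y : {set 'I_n}) s (f : 'I_n -> 'I_n) :
  in_P p -> (forall y, y \in Y -> [/\ f y \in Y, f y != y & s <= cnt p (f y) y]) ->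
  0 < #|Y| -> #|Y| * s <= h * (#|Y|).-1.
Proof.
move=> Hp Hf Y0.
have -> : #|Y| * s = \sum_(y in Y) s by rewrite sum_nat_const mulnC.
apply: (@leq_trans (\sum_(y in Y) \sum_(i < h) (spref p i (f y) y : nat))).
  by apply: leq_sum => y yY; rewrite -cnt_sum; case: (Hf y yY).
rewrite exchange_big /=.
apply: (@leq_trans (\sum_(i < h) (#|Y|).-1)); last by rewrite sum_nat_const card_ord.
apply: leq_sum => i _.
have [y1 y1Y] : exists y1, y1 \in Y by apply/set0Pn; rewrite -card_gt0.
have [y0 y0Y Hy0] := top_exists i Hp y1Y.
rewrite -sum1_card (bigD1 y0) //= [X in _ <= X.-1](bigD1 y0) //=.
case: (Hf y0 y0Y) => fY _ _; rewrite (negbTE (Hy0 _ fY)) !add0n.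
by apply: leq_sum => y _; case: (spref _ _ _ _).
Qed.
Lemma arith n h M : 2 <= n -> 2 <= h -> h <= 2*M -> n.-1 * M.+1 <= h * n.-2 -> ~ T1 h n.
Proof.
move=> hn hh hM H; rewrite /T1.
case=> [h3|]; last case=> [n3|].
- have [E|E] : h = 2 \/ h = 3 by lia.
  + have : n.-1 * 2 <= n.-1 * M.+1 by rewrite leq_mul2l; apply/orP; right; lia.
    subst; lia.
  + have : n.-1 * 3 <= n.-1 * M.+1 by rewrite leq_mul2l; apply/orP; right; lia.
    subst; lia.
- have [E|E] : n = 2 \/ n = 3 by lia.
  + subst; simpl in H; lia.
  + subst; simpl in H; lia.
- by case=> [[E1 E2]|[[E1 E2]|[[E1 E2]|[E1 E2]]]]; subst; simpl in H; lia.
Qed.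

Lemma key n h (q : profile n h) x : in_P q -> good q x ->
  (forall y, cnt q x y <= \max_w cnt q w x) -> 2 <= n ->
  n.-1 * (\max_w cnt q w x).+1 <= h * n.-2.
Proof.
move=> Hq G Hx n2.
set Mq := \max_w cnt q w x.
pose Y := [set~ x].
have cY : #|Y| = n.-1 by rewrite cardsC1 card_ord.
pose f y := odflt y [pick z | (z != x) && (Mq < cnt q z y)].
have Hf : forall y, y \in Y -> [/\ f y \in Y, f y != y & Mq.+1 <= cnt q (f y) y].
  move=> y; rewrite !inE => yx; rewrite /f.
  case: pickP => [z /andP[zx Mz] | H] /=.
    split; [exact: zx | | exact: Mz].
    by apply/negP => /eqP zy; move: Mz; rewrite zy cnt_diag.
  exfalso; have [z [hz Hz]] := G y yx.
  have Mz : Mq < cnt q z y.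
    have := Hz x; have : Mq <= (cnt q z y).-1.
      by apply/bigmax_leqP => w _; have := Hz w; lia.
    lia.
  have := H z; rewrite Mz andbT => /negbT; rewrite negbK => /eqP zx.
  by move: Mz; rewrite zx; have := Hx y; lia.
have := count_bound Hq Hf; rewrite cY; apply; lia.
Qed.

Lemma impossible n h (p : profile n h) x : 2 <= n -> 2 <= h -> in_P p ->
  good p x -> good (rev_profile p) x -> ~ T1 h n.
Proof.
move=> n2 h2 Hp G Gr.
set Mx := \max_w cnt p w x.
set Wx := \max_w cnt p x w.
have [w0 w0x] : exists w, w != x.
  case: (pickP (fun w : 'I_n => w != x)) => [w ?|H]; first by exists w.
  exfalso; have : #|[set~ x]| = 0 by apply/eqP; rewrite cards_eq0; apply/eqP/setP => w; rewrite !inE H.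
  by rewrite cardsC1 card_ord; lia.
have c1 := cnt_compl Hp w0x.
have l1 : cnt p w0 x <= Mx by apply: leq_bigmax.
have l2 : cnt p x w0 <= Wx by apply: leq_bigmax.
have [WM|MW] := leqP Wx Mx.
- apply: (@arith n h Mx) => //; first lia.
  apply: key => // y; apply: leq_trans WM; exact: leq_bigmax.
- have Hr : in_P (rev_profile p).
    move=> i; case: (Hp i) => r a t tt; split.
    + by move=> u; exact: r.
    + by move=> u v; rewrite /rev_profile andbC; exact: a.
    + by move=> u v w H1 H2; exact: t H2 H1.
    + by move=> u v; exact: tt.
  have EW : \max_w cnt (rev_profile p) w x = Wx.
    by apply: eq_bigr => w _; rewrite cnt_rev.
  apply: (@arith n h Wx) => //; first lia.
  rewrite -EW; apply: key => // y; rewrite EW cnt_rev.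
  apply: leq_trans (ltnW MW); exact: leq_bigmax.
Qed.

Definition G n h := exists (p : profile n h) (x : 'I_n),
  in_P p /\ good p x /\ good (rev_profile p) x.

Definition addpair n h (p : profile n h) : profile n h.+2 := fun i =>
  match (insub (val i) : option 'I_h) with
  | Some j => p j
  | None => if val i == h then (fun u v : 'I_n => u <= v) else (fun u v : 'I_n => v <= u)
  end.

Lemma lin_le n : linear_order (fun u v : 'I_n => u <= v).
Proof.
split.
- by move=> u; exact: leqnn.
- by move=> u v /anti_leq /val_inj.
- by move=> u v w; exact: leq_trans.
- by move=> u v; exact: leq_total.
Qed.

Lemma lin_ge n : linear_order (fun u v : 'I_n => v <= u).
Proof.
split.
- by move=> u; exact: leqnn.
- by move=> u v; rewrite andbC => /anti_leq /val_inj.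
- by move=> u v w H1 H2; exact: leq_trans H2 H1.
- by move=> u v; exact: leq_total.
Qed.

Lemma in_P_addpair n h (p : profile n h) : in_P p -> in_P (addpair p).
Proof.
move=> Hp i; rewrite /addpair; case: (insub (val i)) => [j|]; first exact: Hp.
by case: (_ == _); [exact: lin_le | exact: lin_ge].
Qed.

Lemma pair_sum n (z y : 'I_n) :
  ((z != y) && (z <= y)) + ((z != y) && (y <= z)) = (z != y).
Proof.
have e : (z == y) = (val z == val y) by [].
rewrite e; case: (ltngtP z y) => H /=.
- by [].
- by [].
- by [].
Qed.

Lemma addpair_lt n h (p : profile n h) (i : 'I_h.+2) (j : 'I_h) :
  val i = val j -> addpair p i = p j.
Proof. by rewrite /addpair => ->; rewrite valK. Qed.

Lemma addpair_eq n h (p : profile n h) (i : 'I_h.+2) :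
  val i = h -> addpair p i = (fun u v : 'I_n => u <= v).
Proof. by rewrite /addpair => ->; rewrite insubN ?ltnn // eqxx. Qed.

Lemma addpair_gt n h (p : profile n h) (i : 'I_h.+2) :
  val i = h.+1 -> addpair p i = (fun u v : 'I_n => v <= u).
Proof.
rewrite /addpair => ->; rewrite insubN ?ltnNge ?leqnSn //.
by rewrite (_ : (h.+1 == h) = false) //; apply/negbTE; rewrite neq_ltn ltnSn orbT.
Qed.

Lemma cnt_addpair n h (p : profile n h) z y :
  cnt (addpair p) z y = cnt p z y + (z != y).
Proof.
rewrite !cnt_sum !big_ord_recr /= -addnA; congr (_ + _).
  by apply: eq_bigr => i _; rewrite /spref (addpair_lt p (j := i)).
have E1 := addpair_eq p (i := widen_ord (leqnSn h.+1) ord_max) erefl.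
have E2 := addpair_gt p (i := ord_max) erefl.
rewrite /spref E1 E2; exact: pair_sum.
Qed.

Lemma good_plus n h (p : profile n h) (q : profile n h.+2) x :
  (forall z y, cnt q z y = cnt p z y + (z != y)) -> good p x -> good q x.
Proof.
move=> E G y yx; have [z [hz Hz]] := G y yx.
have zy : z != y by apply/negP => /eqP zy; move: hz; rewrite zy cnt_diag muln0.
exists z; rewrite !E zy; split; first lia.
move=> w; have := Hz w; rewrite E; case: (w != x); lia.
Qed.

Lemma G_h2 n h : G n h -> G n h.+2.
Proof.
move=> [p [x [Hp [Gp Gr]]]]; exists (addpair p), x; split; first exact: in_P_addpair.
split; first by apply: good_plus Gp => z y; exact: cnt_addpair.
apply: good_plus Gr => z y; rewrite (cnt_rev (addpair p)) (cnt_rev p) cnt_addpair; congr (_ + _).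
by rewrite eq_sym.
Qed.

Definition proj n (a : 'I_n) (u : 'I_n.+1) : 'I_n :=
  if unlift ord_max u is Some v then v else a.

Definition clone n h (p : profile n h) (a : 'I_n) : profile n.+1 h := fun i u v =>
  if proj a u == proj a v then u <= v else p i (proj a u) (proj a v).

Lemma proj_lift n (a v : 'I_n) : proj a (lift ord_max v) = v.
Proof. by rewrite /proj liftK. Qed.

Lemma proj_max n (a : 'I_n) : proj a ord_max = a.
Proof. by rewrite /proj unlift_none. Qed.

Lemma proj_inj n (a : 'I_n) u v : proj a u = proj a v -> proj a u != a -> u = v.
Proof.
case: (unliftP ord_max u) => [u'|] ->; case: (unliftP ord_max v) => [v'|] ->;
  rewrite ?proj_lift ?proj_max.
- by move=> ->.
- by move=> ->; rewrite eqxx.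
- by move=> _; rewrite eqxx.
- by [].
Qed.

Lemma in_P_clone n h (p : profile n h) a : in_P p -> in_P (clone p a).
Proof.
move=> Hp i; case: (Hp i) => r an tr tt; rewrite /clone; split.
- by move=> u /=; rewrite eqxx leqnn.
- move=> u v /=; case: (eqVneq (proj a u) (proj a v)) => E.
    by move=> /anti_leq H; apply: val_inj.
  by move=> /an E'; rewrite E' eqxx in E.
- move=> v u w /=; case: (eqVneq (proj a u) (proj a v)) => Euv;
  case: (eqVneq (proj a v) (proj a w)) => Evw;
  case: (eqVneq (proj a u) (proj a w)) => Euw.
  + exact: leq_trans.
  + by move: Euw; rewrite Euv Evw eqxx.
  + by move: Evw; rewrite -Euv Euw eqxx.
  + by rewrite Euv.
  + by move: Euv; rewrite Euw -Evw eqxx.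
  + by rewrite Evw.
  + rewrite -Euw => H1 H2; have := an (proj a u) (proj a v); rewrite H1 H2 => /(_ isT) E.
    by rewrite E eqxx in Euv.
  + exact: tr.
- move=> u v /=; case: (eqVneq (proj a u) (proj a v)) => E.
    exact: leq_total.
  exact: tt.
Qed.

Lemma cnt_clone n h (p : profile n h) a u v :
  proj a u != proj a v -> cnt (clone p a) u v = cnt p (proj a u) (proj a v).
Proof.
move=> puv; rewrite /cnt; apply: eq_card => i; rewrite !inE /spref /clone (negbTE puv).
by case: (eqVneq u v) puv => // ->; rewrite eqxx.
Qed.

Lemma good_clone n h (p : profile n h) (q : profile n.+1 h) a x : x != a ->
  (forall u v, proj a u != proj a v -> cnt q u v = cnt p (proj a u) (proj a v)) ->
  good p x -> good q (lift ord_max x).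
Proof.
move=> xa E G y yx.
have y0x : proj a y != x.
  apply/negP => /eqP e; move/negP: yx; apply; apply/eqP.
  by apply: (proj_inj (a := a)); rewrite ?proj_lift e.
have [z [hz Hz]] := G _ y0x.
have zy : z != proj a y by apply/negP => /eqP zy; move: hz; rewrite zy cnt_diag muln0.
exists (lift ord_max z); rewrite E proj_lift //; split => // w.
case: (eqVneq (proj a w) x) => wx.
  have -> : w = lift ord_max x by apply: (proj_inj (a := a)); rewrite ?proj_lift wx.
  by rewrite cnt_diag; lia.
by rewrite E proj_lift // Hz.
Qed.

Lemma exists_other n (x : 'I_n) : 2 <= n -> exists a, a != x.
Proof.
move=> n2; case: (pickP (fun w : 'I_n => w != x)) => [w ?|H]; first by exists w.
exfalso; have : #|[set~ x]| = 0.
  by apply/eqP; rewrite cards_eq0; apply/eqP/setP => w; rewrite !inE H.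
by rewrite cardsC1 card_ord; lia.
Qed.

Lemma G_n1 n h : 2 <= n -> G n h -> G n.+1 h.
Proof.
move=> n2 [p [x [Hp [Gp Gr]]]].
have [a ax] := exists_other x n2.
exists (clone p a), (lift ord_max x); split; first exact: in_P_clone.
split.
  apply: (good_clone (a := a)) Gp; first by rewrite eq_sym.
  by move=> u v; exact: cnt_clone.
apply: (good_clone (p := rev_profile p) (a := a)) Gr; first by rewrite eq_sym.
move=> u v puv; rewrite (cnt_rev (clone p a)) (cnt_rev p) cnt_clone //.
by rewrite eq_sym.
Qed.

Definition rkp n h (L : seq (seq nat)) : profile n h := fun i u v =>
  index (val u) (nth [::] L i) <= index (val v) (nth [::] L i).

Definition memok n h (L : seq (seq nat)) :=
  all (fun k => all (fun u => u \in nth [::] L k) (iota 0 n)) (iota 0 h).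

Definition cn h (L : seq (seq nat)) (z y : nat) :=
  count (fun k => index z (nth [::] L k) < index y (nth [::] L k)) (iota 0 h).

Lemma memokP n h L (i : 'I_h) (u : 'I_n) : memok n h L -> val u \in nth [::] L i.
Proof.
move=> /allP /(_ i); rewrite mem_iota add0n ltn_ord => /(_ isT) /allP; apply.
by rewrite mem_iota add0n ltn_ord.
Qed.

Lemma in_P_rkp n h L : memok n h L -> in_P (@rkp n h L).
Proof.
move=> M i; rewrite /rkp; split.
- by move=> u.
- move=> u v /anti_leq E; apply: val_inj.
  exact: (index_inj 0 (memokP i u M) (memokP i v M) E).
- by move=> v u w; exact: leq_trans.
- by move=> u v; exact: leq_total.
Qed.

Lemma sum_count (s : seq nat) (P : pred nat) : \sum_(i <- s) (P i : nat) = count P s.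
Proof. by elim: s => [|a s IH]; rewrite ?big_nil ?big_cons //= IH. Qed.

Lemma cnt_rkp n h L (z y : 'I_n) : memok n h L -> cnt (@rkp n h L) z y = cn h L z y.
Proof.
move=> M; rewrite cnt_sum /cn -sum_count.
rewrite (_ : iota 0 h = index_iota 0 h); last by rewrite /index_iota subn0.
rewrite big_mkord; apply: eq_bigr => i _; rewrite /spref /rkp.
case: (eqVneq z y) => [->|zy]; first by rewrite ltnn.
rewrite /= leq_eqVlt.
case: eqP => // E; exfalso; move/eqP: zy; apply; apply: val_inj.
exact: (index_inj 0 (memokP i z M) (memokP i y M) E).
Qed.

Definition goodb (c : nat -> nat -> nat) n h x :=
  all (fun y => (y == x) || has (fun z => (h < 2 * c z y) &&
     all (fun w => c w x < c z y) (iota 0 n)) (iota 0 n)) (iota 0 n).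

Lemma goodb_good n h (p : profile n h) (c : nat -> nat -> nat) (x : 'I_n) :
  (forall z y : 'I_n, cnt p z y = c (val z) (val y)) -> goodb c n h x -> good p x.
Proof.
move=> E /allP Gb y yx.
have := Gb y; rewrite mem_iota add0n ltn_ord => /(_ isT).
have -> : (val y == val x) = false by apply/negbTE.
move=> /= /hasP [z]; rewrite mem_iota add0n => zn /andP [hz /allP Hw].
exists (Ordinal zn); rewrite E; split => // w; rewrite E.
by apply: Hw; rewrite mem_iota add0n ltn_ord.
Qed.

Definition cnr h L (z y : nat) := cn h L y z.

Lemma G_base n h L (x : 'I_n) : memok n h L -> goodb (cn h L) n h x ->
  goodb (cnr h L) n h x -> G n h.
Proof.
move=> M G1 G2; exists (@rkp n h L), x; split; first exact: in_P_rkp.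
split; first by apply: goodb_good G1 => z y; exact: cnt_rkp.
by apply: goodb_good G2 => z y; rewrite cnt_rev cnt_rkp.
Qed.

Definition L64 := [:: [:: 2;0;1;3]; [:: 0;2;1;3]; [:: 1;0;3;2]; [:: 1;3;2;0]; [:: 3;0;2;1]; [:: 3;2;1;0]].
Definition L45 := [:: [:: 1;3;2;0;4]; [:: 3;0;2;4;1]; [:: 2;4;0;1;3]; [:: 4;1;0;3;2]].
Definition L56 := [:: [:: 3;0;2;5;4;1]; [:: 4;1;3;0;2;5]; [:: 0;5;4;1;3;2]; [:: 2;5;0;4;1;3]; [:: 1;3;2;5;4;0]].
Definition L75 := [:: [:: 3;4;2;1;0]; [:: 1;3;4;0;2]; [:: 0;2;1;3;4]; [:: 1;3;0;4;2]; [:: 4;2;0;3;1]; [:: 0;4;2;1;3]; [:: 2;1;3;0;4]].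
Definition L94 := [:: [:: 1;2;3;0]; [:: 2;3;0;1]; [:: 0;3;1;2]; [:: 1;2;0;3]; [:: 2;0;3;1]; [:: 0;2;3;1]; [:: 3;0;1;2]; [:: 1;2;0;3]; [:: 3;1;0;2]].

Lemma G_4_6 : G 4 6. Proof. by apply: (@G_base 4 6 L64 ord0); vm_compute. Qed.
Lemma G_5_4 : G 5 4. Proof. by apply: (@G_base 5 4 L45 ord0); vm_compute. Qed.
Lemma G_6_5 : G 6 5. Proof. by apply: (@G_base 6 5 L56 ord0); vm_compute. Qed.
Lemma G_5_7 : G 5 7. Proof. by apply: (@G_base 5 7 L75 ord0); vm_compute. Qed.
Lemma G_4_9 : G 4 9. Proof. by apply: (@G_base 4 9 L94 ord0); vm_compute. Qed.

Lemma G_h2k n h k : G n h -> G n (h + 2 * k).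
Proof.
move=> Gh; elim: k => [|k IH]; first by rewrite muln0 addn0.
by rewrite (_ : h + 2 * k.+1 = (h + 2 * k).+2); [exact: G_h2 | lia].
Qed.

Lemma G_nk n h k : 2 <= n -> G n h -> G (n + k) h.
Proof.
move=> n2 Gn; elim: k => [|k IH]; first by rewrite addn0.
by rewrite addnS; apply: G_n1 => //; lia.
Qed.

Lemma G_from n h : ~ T1 h n -> 2 <= n -> 2 <= h -> G n h.
Proof.
move=> nT n2 h2.
have NT : ~ (h <= 3 \/ n <= 3 \/ (h = 4 /\ n = 4) \/ (h = 5 /\ n = 4) \/
            (h = 7 /\ n = 4) \/ (h = 5 /\ n = 5)).
  move=> H; apply: nT; rewrite /T1.
  case: H => [H|[H|[[-> ->]|[[-> ->]|[[-> ->]|[-> ->]]]]]]; tauto.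
have E := odd_double_half h; rewrite -muln2 in E.
case/boolP: (odd h) => oh; [rewrite oh /= in E | rewrite (negbTE oh) /= in E].
- have [e5|[e7|h9]] : h = 5 \/ h = 7 \/ 9 <= h by lia.
  + rewrite e5 (_ : n = 6 + (n - 6)); last lia.
    by apply: G_nk => //; exact: G_6_5.
  + rewrite e7 (_ : n = 5 + (n - 5)); last lia.
    by apply: G_nk => //; exact: G_5_7.
  + rewrite (_ : n = 4 + (n - 4)); last lia.
    apply: G_nk => //; rewrite (_ : h = 9 + 2 * (h./2 - 4)); last lia.
    by apply: G_h2k; exact: G_4_9.
- have [e4|h6] : h = 4 \/ 6 <= h by lia.
  + rewrite e4 (_ : n = 5 + (n - 5)); last lia.
    by apply: G_nk => //; exact: G_5_4.
  + rewrite (_ : n = 4 + (n - 4)); last lia.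
    apply: G_nk => //; rewrite (_ : h = 6 + 2 * (h./2 - 3)); last lia.
    by apply: G_h2k; exact: G_4_6.
Qed.

Theorem proposition3 (n h : nat) (hn : 2 <= n) (hh : 2 <= h) :
  (exists (p : profile n h) (x : 'I_n),
      in_P p /\
      D (mu_of p) p = [set x] /\
      D (mu_of (rev_profile p)) (rev_profile p) = [set x])
  <-> ~ T1 h n.
Proof.
have h0 : 0 < h by lia.
split.
- move=> [p [x [Hp [H1 H2]]]].
  apply: (impossible (p := p) (x := x)) => //; exact: char_fwd.
- move=> nT; have [p [x [Hp [G1 G2]]]] := G_from nT hn hh.
  exists p, x; split => //; split; apply: char_bwd => //; exact: exists_other.
Qed.
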